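(* Let $G$ be a connected graph of order $n$. Then $\mathrm{sn}(G)=n-1$ if and only if $G=K_n$. Also, $\overline{\mathrm{scs}}(G)=n-1$ if and only if $G=K_n$.
   Context: All graphs are finite and simple. For a graph $G=(V,E)$ and an integer $k\ge\chi(G)$, a proper $k$-colouring is a map $c:V\to[k]=\{1,\dots,k\}$ with $c(u)\neq c(v)$ for every edge $uv$. A set $S\subseteq V$ is a determining set for $(G,c)$ if there is no proper $k$-colouring $c'\neq c$ of $G$ with $c'(s)=c(s)$ for all $s\in S$. A critical set for $(G,c)$ is an inclusion-minimal determining set. $\mathrm{scs}(G,c)$ and $\mathrm{lcs}(G,c)$ denote the size of a smallest resp. largest critical set for $(G,c)$. $\mathrm{sn}(G,k)$ is the minimum of $\mathrm{scs}(G,c)$ over all proper $k$-colourings $c$ (equivalently, the minimum number of vertices coloured in a partial colouring that extends uniquely to a proper $k$-colouring); $\overline{\mathrm{scs}}(G,k)$ is the maximum of $\mathrm{scs}(G,c)$ over all proper $k$-colourings $c$. When $k=\chi(G)$ the second argument is omitted: $\mathrm{sn}(G)=\mathrm{sn}(G,\chi(G))$, $\overline{\mathrm{scs}}(G)=\overline{\mathrm{scs}}(G,\chi(G))$. $K_n$ is the complete graph on $n$ vertices. *)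

(* Defs.v *)
From mathcomp Require Import all_boot.
Set Implicit Arguments. Unset Strict Implicit. Unset Printing Implicit Defensive.

(* A simple graph: a symmetric irreflexive relation e on a finite type T.
   Colours [k] = {1..k} are represented by 'I_k = {0..k-1}. *)
Section Colouring.
Variables (T : finType) (e : rel T).

Definition colouring (k : nat) := {ffun T -> 'I_k}.

Definition proper (k : nat) (c : colouring k) : bool :=
  [forall x, forall y, e x y ==> (c x != c y)].

Definition colourable (k : nat) : bool := [exists c : colouring k, proper c].

Definition is_chi (k : nat) : Prop :=
  colourable k /\ forall j, j < k -> ~~ colourable j.

Definition determining (k : nat) (c : colouring k) (S : {set T}) : bool :=
  [forall c' : colouring k,
     (proper c' && [forall s in S, c' s == c s]) ==> (c' == c)].

Definition critical (k : nat) (c : colouring k) (S : {set T}) : bool :=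
  minset (determining c) S.

(* size of a smallest critical set (critical sets always exist, since setT
   is determining; the default #|T| is never attained spuriously) *)
Definition scs (k : nat) (c : colouring k) : nat :=
  \big[minn/#|T|]_(S : {set T} | critical c S) #|S|.

Definition sn (k : nat) : nat :=
  \big[minn/#|T|]_(c : colouring k | proper c) scs c.

Definition scsbar (k : nat) : nat :=
  \max_(c : colouring k | proper c) scs c.

Definition connected_graph : Prop := forall x y : T, connect e x y.

Definition complete_graph : Prop := forall x y : T, x != y -> e x y.

End Colouring.

(* Main.v *)
Require Import Defs.
From mathcomp Require Import all_boot.
From mathcomp Require Import zify.
Set Implicit Arguments. Unset Strict Implicit. Unset Printing Implicit Defensive.

Lemma bigmin_le (I : finType) (P : pred I) (m : nat) (F : I -> nat) i0 :
  P i0 -> \big[minn/m]_(i | P i) F i <= F i0.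
Proof.
move=> Pi0; have: i0 \in index_enum I by rewrite mem_index_enum.
elim: (index_enum I) => [//|j s IH]; rewrite big_cons in_cons.
case/orP => [/eqP <-|/IH H]; first by rewrite Pi0 geq_minl.
case: (P j) => //; exact: leq_trans (geq_minr _ _) H.
Qed.

Lemma bigmin_ge (I : finType) (P : pred I) (m a : nat) (F : I -> nat) :
  a <= m -> (forall i, P i -> a <= F i) -> a <= \big[minn/m]_(i | P i) F i.
Proof. by move=> am aF; elim/big_ind: _ => // x y ax ay; rewrite leq_min ax ay. Qed.

Section S.
Variables (T : finType) (e : rel T).
Hypotheses (e_sym : symmetric e) (e_irr : irreflexive e).

Lemma properP k (c : colouring T k) : Defs.proper e c -> forall u v, e u v -> c u != c v.
Proof. by move=> /forallP H u v; move/forallP: (H u) => /(_ v) /implyP. Qed.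

Lemma scs_le k (c : colouring T k) S : determining e c S -> scs e c <= #|S|.
Proof.
move=> dS; case: (minset_exists dS) => A mA sAS.
apply: leq_trans (subset_leq_card sAS).
exact: (bigmin_le _ _ mA).
Qed.

Definition forced k (c : colouring T k) v :=
  [forall j : 'I_k, (j != c v) ==> [exists w, e v w && (c w == j)]].
Definition forced_wo k (c : colouring T k) v x :=
  [forall j : 'I_k, (j != c v) ==> [exists w, [&& e v w, w != x & c w == j]]].

Lemma det_pair k (c : colouring T k) x y : Defs.proper e c -> x != y ->
  forced c x -> forced_wo c y x -> determining e c ([set: T] :\ x :\ y).
Proof.
move=> pc nxy fx fy; apply/forallP => c'; apply/implyP => /andP[pc' /forallP agr].
have agS z : z != x -> z != y -> c' z = c z.
  by move=> zx zy; apply/eqP; move/implyP: (agr z); rewrite !inE zx zy /=; apply.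
have ey : c' y = c y.
  apply/eqP; apply/negPn/negP => ne.
  move/forallP: fy => /(_ (c' y)); rewrite ne /= => /existsP [w /and3P [eyw wx /eqP cw]].
  have wy : w != y by apply: contraTneq eyw => ->; rewrite e_irr.
  by have := properP pc' eyw; rewrite (agS w wx wy) cw eqxx.
have ex : c' x = c x.
  apply/eqP; apply/negPn/negP => ne.
  move/forallP: fx => /(_ (c' x)); rewrite ne /= => /existsP [w /andP [exw /eqP cw]].
  have wx : w != x by apply: contraTneq exw => ->; rewrite e_irr.
  have := properP pc' exw.
  case: (eqVneq w y) => [wy|wy].
    by subst w; rewrite ey cw eqxx.
  by rewrite (agS w wx wy) cw eqxx.
apply/eqP/ffunP => z.
case: (eqVneq z x) => [->//|zx].
case: (eqVneq z y) => [->//|zy].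
exact: agS.
Qed.

Lemma card2 (x y : T) : x != y -> #|[set: T] :\ x :\ y| + 2 = #|T|.
Proof.
move=> xy.
have := cardsD1 x [set: T]; have := cardsD1 y ([set: T] :\ x).
rewrite !inE cardsT eq_sym xy /=; lia.
Qed.

Lemma forced_exists k (c : colouring T k) (t0 : T) : Defs.proper e c ->
  ~~ colourable e k.-1 -> forall i : 'I_k, exists v, (c v == i) && forced c v.
Proof.
case: k c => [|k] c pc ncol i; first by case: i.
case: (boolP [exists v, (c v == i) && forced c v]) => [/existsP //|H].
exfalso.
have nf v : c v = i -> exists j : 'I_k.+1, (j != i) && ~~ [exists w, e v w && (c w == j)].
  move=> cv; have: ~~ forced c v by move/existsPn: H => /(_ v); rewrite cv eqxx.
  by move/forallPn => [j]; rewrite negb_imply cv => Hj; exists j.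
pose m := fun v => [pick j : 'I_k.+1 | (j != i) && ~~ [exists w, e v w && (c w == j)]].
pose c2 := fun v => if c v == i then odflt i (m v) else c v.
have c2ni v : i != c2 v.
  rewrite eq_sym /c2; case: ifP => [/eqP cv|/negbT //].
  rewrite /m; case: pickP => [j /andP[] //|none].
  by case: (nf v cv) => j Hj; move: (none j) => /=; rewrite Hj.
have key a b : e a b -> c a == i -> c b != i -> c2 a != c2 b.
  move=> eab /eqP ca cb; rewrite /c2 ca eqxx (negbTE cb) /=.
  rewrite /m; case: pickP => [j /andP[_ /existsPn nw]|none]; last first.
    by case: (nf a ca) => j Hj; move: (none j) => /=; rewrite Hj.
  by move: (nw b); rewrite eab /=; apply: contra => /eqP ->.
have c2p u v : e u v -> c2 u != c2 v.
  move=> euv.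
  case Eu: (c u == i); case Ev: (c v == i).
  - by have := properP pc euv; rewrite (eqP Eu) (eqP Ev) eqxx.
  - by apply: key => //; rewrite Ev.
  - by rewrite eq_sym; apply: key; [rewrite e_sym | | rewrite Eu].
  - by rewrite /c2 Eu Ev /=; exact: (properP pc euv).
case: (unlift_some (c2ni t0)) => d _ _.
pose c3 : {ffun T -> 'I_k} := [ffun v => odflt d (unlift i (c2 v))].
have c3E v : c2 v = lift i (c3 v).
  by rewrite ffunE; case: (unlift_some (c2ni v)) => j E1 E2; rewrite E2.
apply: (negP ncol); apply/existsP; exists c3.
apply/forallP => u; apply/forallP => v; apply/implyP => euv.
by apply: contra (c2p u v euv) => /eqP h; rewrite !c3E h.
Qed.

Lemma connect_cross (P : pred T) a b : connect e a b -> P a -> ~~ P b ->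
  exists x y, [/\ e x y, P x & ~~ P y].
Proof.
move=> /connectP [p pth ->].
elim: p a pth => [|z p IH] a /=; first by move=> _ ->.
move=> /andP [eaz pth] Pa nPl.
case Pz: (P z); first exact: IH pth Pz nPl.
by exists a, z; rewrite Pz.
Qed.

Lemma pair_exists k (c : colouring T k) (t0 : T) : Defs.proper e c ->
  ~~ colourable e k.-1 -> connected_graph e -> ~ complete_graph e ->
  exists x y, [/\ x != y, forced c x & forced_wo c y x].
Proof.
move=> pc ncol conn ncomp.
have fe := forced_exists t0 pc ncol.
case: (boolP [forall v, forced c v]) => [allf|].
- have: ~~ [forall u, forall w, (u != w) ==> e u w].
    apply/negP => /forallP H; apply: ncomp => u w uw.
    by move/forallP: (H u) => /(_ w) /implyP; apply.
  move=> /forallPn [u] /forallPn [w]; rewrite negb_imply => /andP [uw neuw].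
  exists u, w; split => //; first by apply: (forallP allf).
  apply/forallP => j; apply/implyP => jn.
  move/forallP: (forallP allf w) => /(_ j); rewrite jn /= => /existsP [z /andP [ewz cz]].
  apply/existsP; exists z; rewrite ewz cz andbT /=.
  by apply: (contraNneq _ neuw) => zu; rewrite -zu e_sym.
- move=> /forallPn [v nfv].
  case: (fe (c t0)) => f0 /andP [_ ff0].
  case: (connect_cross (P := forced c) (conn f0 v) ff0 nfv) => f [v' [efv ff nfv']].
  case: (fe (c v')) => g /andP [/eqP cg fg].
  exists g, f; split => //.
  + apply: (contraTneq _ (properP pc efv)) => gf.
    by rewrite -gf cg eqxx.
  + apply/forallP => j; apply/implyP => jn.
    case: (eqVneq j (c v')) => [->|jv].
    * apply/existsP; exists v'; rewrite efv eqxx andbT /=.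
      by apply: contraNneq nfv' => ->.
    * move/forallP: ff => /(_ j); rewrite jn /= => /existsP [w /andP [efw /eqP cw]].
      apply/existsP; exists w; rewrite efw cw eqxx andbT /=.
      by apply: (contra_neq _ jv) => wg; rewrite -cw wg cg.
Qed.

Lemma noncomplete_scs k (c : colouring T k) (t0 : T) : Defs.proper e c ->
  ~~ colourable e k.-1 -> connected_graph e -> ~ complete_graph e ->
  2 <= #|T| /\ scs e c <= #|T| - 2.
Proof.
move=> pc ncol conn ncomp.
case: (pair_exists t0 pc ncol conn ncomp) => x [y [xy fx fy]].
have dS := det_pair pc xy fx fy.
have cS := card2 xy.
have := scs_le dS; split; lia.
Qed.

Lemma complete_k k : complete_graph e -> is_chi e k -> k = #|T|.
Proof.
move=> comp [colk mink].
apply/eqP; rewrite eqn_leq; apply/andP; split.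
- rewrite leqNgt; apply/negP => lt; apply: (negP (mink _ lt)).
  apply/existsP; exists [ffun v => enum_rank v].
  apply/forallP => x; apply/forallP => y; apply/implyP => exy; rewrite !ffunE.
  by apply: (contraTneq _ exy) => /enum_rank_inj ->; rewrite e_irr.
- case/existsP: colk => c pc.
  have inj : injective c.
    move=> x y cxy; apply/eqP; apply/negPn/negP => nxy.
    have exy : e x y by apply: comp.
  by have := properP pc exy; rewrite cxy eqxx.
  by have := leq_card c inj; rewrite card_ord.
Qed.

Section Comp.
Variables (k : nat) (c : colouring T k).
Hypotheses (comp : complete_graph e) (pc : Defs.proper e c) (hk : k = #|T|).

Lemma c_inj : injective c.
Proof.
move=> x y cxy; apply/eqP; apply/negPn/negP => nxy.
have exy : e x y by apply: comp.
  by have := properP pc exy; rewrite cxy eqxx.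
Qed.

Lemma c_onto (j : 'I_k) : exists v, c v = j.
Proof.
have cr : #|'I_k| <= #|T| by rewrite card_ord hk.
have /codomP [v ->] := inj_card_onto c_inj cr j; by exists v.
Qed.

Lemma det_ge S : determining e c S -> #|T| - 1 <= #|S|.
Proof.
move=> dS; rewrite leqNgt; apply/negP => lt.
have: 1 < #|~: S| by have := cardsC S; lia.
move/card_gt1P => [u [w [uS wS uw]]].
rewrite !in_setC in uS wS.
pose sw z := if z == u then w else if z == w then u else z.
have swK : involutive sw.
  move=> z; rewrite /sw; case: (eqVneq z u) => [->|zu].
    by rewrite eqxx eq_sym (negbTE uw).
  case: (eqVneq z w) => [->|zw]; first by rewrite eqxx.
  by rewrite (negbTE zu) (negbTE zw).
have swI := can_inj swK.
pose c' : colouring T k := [ffun z => c (sw z)].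
have c'u : c' u = c w by rewrite ffunE /sw eqxx.
have neq : c' != c.
  apply/eqP => h; have := congr1 (fun f : colouring T k => f u) h; rewrite /= c'u => /c_inj wu.
  by rewrite wu eqxx in uw.
apply: (negP neq); move/forallP: dS => /(_ c') /implyP; apply.
apply/andP; split.
- apply/forallP => x; apply/forallP => y; apply/implyP => exy; rewrite !ffunE.
  apply/eqP => /c_inj /swI xy; by rewrite xy e_irr in exy.
- apply/forallP => s; apply/implyP => sS; rewrite ffunE /sw.
  have su : s != u by apply: contraNneq uS => <-.
  have sw' : s != w by apply: contraNneq wS => <-.
  by rewrite (negbTE su) (negbTE sw').
Qed.

Lemma det_all_but v0 : determining e c ([set: T] :\ v0).
Proof.
apply/forallP => c'; apply/implyP => /andP[pc' /forallP agr].
have agS z : z != v0 -> c' z = c z.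
  by move=> zx; apply/eqP; move/implyP: (agr z); rewrite !inE zx /=; apply.
have ev : c' v0 = c v0.
  apply/eqP; apply/negPn/negP => ne.
  case: (c_onto (c' v0)) => w cw.
  have wv : w != v0 by apply: contra_neq ne => wv; rewrite -cw wv.
  have evw : e v0 w by apply: comp; rewrite eq_sym.
  have := properP pc' evw.
  by rewrite (agS w wv) cw eqxx.
apply/eqP/ffunP => z.
case: (eqVneq z v0) => [->//|zx].
exact: agS.
Qed.

Lemma scs_comp (t0 : T) : scs e c = #|T| - 1.
Proof.
apply/eqP; rewrite eqn_leq; apply/andP; split.
- have := scs_le (det_all_but t0).
  have := cardsD1 t0 [set: T]; rewrite cardsT in_setT /=; lia.
- apply: bigmin_ge; first lia.
  by move=> S /minsetP [dS _]; exact: det_ge dS.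
Qed.

End Comp.
End S.

Theorem theorem2 (T : finType) (e : rel T)
  (e_sym : symmetric e) (e_irr : irreflexive e)
  (e_conn : connected_graph e) (n : nat) (hn : #|T| = n) (hn0 : 0 < n)
  (k : nat) (hk : is_chi e k) :
  (sn e k = n - 1 <-> complete_graph e) /\
  (scsbar e k = n - 1 <-> complete_graph e).
Proof.
subst n.
case/card_gt0P: (hn0) => t0 _.
have hk' := hk; case: hk' => colk mink.
case/existsP: colk => c0 pc0.
have k0 : 0 < k by exact: (leq_ltn_trans (leq0n _) (ltn_ord (c0 t0))).
have ncol : ~~ colourable e k.-1 by apply: mink; rewrite ltn_predL.
have dec : complete_graph e \/ ~ complete_graph e.
  case: (boolP [forall u, forall w, (u != w) ==> e u w]) => H; [left|right].
    by move=> u w uw; move/forallP: H => /(_ u) /forallP /(_ w) /implyP; apply.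
  move=> comp; move/negP: H; apply; apply/forallP => u; apply/forallP => w.
  by apply/implyP => /comp.
have sn_le : sn e k <= scs e c0 by exact: (bigmin_le _ _ pc0).
have scsbar_ge : scs e c0 <= scsbar e k by exact: (leq_bigmax_cond _ pc0).
case: dec => [comp|ncomp].
- have hkT := complete_k e_irr comp hk.
  have allc (c : colouring T k) : Defs.proper e c -> scs e c = #|T| - 1.
    by move=> pc; apply: (scs_comp e_irr comp pc hkT t0).
  split; split => // _.
  + apply/eqP; rewrite eqn_leq; apply/andP; split.
      by rewrite -(allc c0 pc0).
    by apply: bigmin_ge; [lia | move=> c pc; rewrite allc].
  + apply/eqP; rewrite eqn_leq; apply/andP; split.
      by apply/bigmax_leqP => c pc; rewrite allc.
    by rewrite -(allc c0 pc0).
- have nb (c : colouring T k) : Defs.proper e c -> 2 <= #|T| /\ scs e c <= #|T| - 2.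
    by move=> pc; exact: (noncomplete_scs e_sym e_irr t0 pc ncol e_conn ncomp).
  have [n2 b0] := nb c0 pc0.
  split; split => // H; exfalso.
  + lia.
  + have : scsbar e k <= #|T| - 2.
      by apply/bigmax_leqP => c pc; case: (nb c pc).
    lia.
Qed.
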